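(* Let $\mathbf{M}=\{\mathbf{m}^{(1)},\ldots,\mathbf{m}^{(d)}\}$ be a blocking of $\mathcal{A}\in\mathbb{R}^{n_1\times\cdots\times n_d}$ with $\mathbf{m}^{(k)}=[m^{(k)}_1,\ldots,m^{(k)}_{b_k}]$, and suppose that for each $k$ the blocking is uniform: $m^{(k)}_1=\cdots=m^{(k)}_{b_k}=\mu_k$. For $k=1,\ldots,d$ let $N_k=n_1\cdots n_k$, $B_k=b_1\cdots b_k$, $D_k=\mu_1\cdots\mu_k$ (with $B_0=D_0=N_0=1$). Let $P_{\mathbf{M}}$ be the permutation matrix defined below. Then $P_{\mathbf{M}}=Q_d\cdots Q_2Q_1$ where \[ Q_k=\begin{cases} I_{N_d} & k=1,\\ I_{b_kN_d/N_k}\otimes \Pi_{\mu_k,B_{k-1}}\otimes I_{D_{k-1}} & 1<k\le d.\end{cases} \]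
   Context: Notation: for $\mathbf{n}=(n_1,\ldots,n_d)$ and $\mathbf{1}\le\mathbf{i}\le\mathbf{n}$ (componentwise), $\mathrm{ivec}(\mathbf{i},\mathbf{n})=i_1+(i_2-1)n_1+\cdots+(i_d-1)n_1\cdots n_{d-1}$. For positive integers $q,r$, $s=qr$, the perfect shuffle $\Pi_{q,r}\in\mathbb{R}^{s\times s}$ is the permutation matrix with $\Pi_{q,r}z=[z(1:r:s);z(2:r:s);\ldots;z(r:r:s)]$. $\otimes$ is the Kronecker product. A blocking of $\mathcal{A}$ is $\mathbf{M}=\{\mathbf{m}^{(1)},\ldots,\mathbf{m}^{(d)}\}$ with each $\mathbf{m}^{(k)}$ a vector of positive integers summing to $n_k$; for $\mathbf{M}_k=\{\mathbf{m}^{(1)},\ldots,\mathbf{m}^{(k)}\}$, $\mathrm{vol}_{\mathbf{M}_k}(\mathbf{i})=m^{(1)}_{i_1}\cdots m^{(k)}_{i_k}$. The permutation $P_{\mathbf{M}}$ is defined as $P_{\mathbf{M}}=\hat Q_d\cdots\hat Q_1$ where $\hat Q_1=I_{N_d}$ and, for $1<k\le d$, $\hat Q_k=I_{N_d/N_k}\otimes\Gamma^{(k)}$ with $\Gamma^{(k)}=\mathrm{diag}(\Gamma^{(k)}_1,\ldots,\Gamma^{(k)}_{b_k})$ and $\Gamma^{(k)}_j=\mathrm{diag}(\ldots,\Pi_{\mathrm{vol}_{\mathbf{M}_{k-1}}(\mathbf{i}),m^{(k)}_j},\ldots)\cdot\Pi_{m^{(k)}_j,N_{k-1}}$, the block diagonal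 having one block per multi-index $\mathbf{1}\le\mathbf{i}\le(b_1,\ldots,b_{k-1})$ ordered by increasing $\mathrm{ivec}(\mathbf{i},(b_1,\ldots,b_{k-1}))$. (This $P_{\mathbf{M}}$ is the permutation with $P_{\mathbf{M}}\mathrm{vec}(\mathcal{A})=\mathrm{vec}_{\mathbf{M}}(\mathcal{A})$, where $\mathrm{vec}$ lists entries in $\mathrm{ivec}$ order and $\mathrm{vec}_{\mathbf{M}}$ stacks the vecs of the blocks of $\mathcal{A}$ in $\mathrm{ivec}$ order of the block index.) *)

(* Defs.v *)
(* Kronecker product: [tensmx] ( A *t B ) from mathcomp real_closed/mxtens.v,
   (A *t B) (i*p + j, k*q + l) = A i k * B j l  (standard Kronecker product). *)
From HB Require Import structures.
From mathcomp Require Import all_boot all_order all_algebra.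
From mathcomp Require Import mxtens.
From mathcomp Require Import reals.

Set Implicit Arguments.
Unset Strict Implicit.
Unset Printing Implicit Defensive.
Import GRing.Theory.
Local Open Scope ring_scope.

(* All indices are 0-based: the paper's mode k (1 <= k <= d) is our k-1,
   the paper's block index j (1 <= j <= b_k) is our j-1, etc.
   Data of a blocking:  n l  = n_{l+1},  b l = b_{l+1},
   m l j = m^{(l+1)}_{j+1}  (meaningful for j < b l). *)

(* N_k = n_1 ... n_k  (our  Nprod n k = prod_{l<k} n l, so Nprod n 0 = 1). *)
Definition Nprod (n : nat -> nat) (k : nat) : nat := \prod_(l < k) n l.

Definition is_blocking (d : nat) (n b : nat -> nat) (m : nat -> nat -> nat) :=
  forall k, (k < d)%N ->
    (forall j, (j < b k)%N -> (0 < m k j)%N) /\ \sum_(j < b k) m k j = n k.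

(* Resize a square matrix to the prescribed size N (identity if the size
   does not match; under the blocking hypotheses all sizes below match). *)
Definition resq (R : pzRingType) (N p : nat) (A : 'M[R]_p) : 'M[R]_N :=
  conform_mx 1%:M A.

(* Perfect shuffle Pi_{q,r} of size s = q r:
   Pi z = [z(1:r:s); z(2:r:s); ...; z(r:r:s)], i.e. (0-based)
   row a*q + c  has its 1 in column  c*r + a  (a < r, c < q). *)
Definition pshuffle (R : pzRingType) (q r : nat) : 'M[R]_(q * r) :=
  \matrix_(i, j) ((nat_of_ord j == (i %% q) * r + i %/ q)%N)%:R.

(* Digit l (0-based) of the multi-index with ivec-rank t (0-based), for the
   radices b_1, ..., : ivec(i,(b_1..b_{k-1})) - 1 = t  with i_{l+1}-1 = digit l. *)
Definition digit (b : nat -> nat) (t l : nat) : nat := (t %/ Nprod b l) %% b l.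

(* vol_{M_{k-1}}(i) for the multi-index i of rank t (paper's k = our k+1). *)
Definition vol (b : nat -> nat) (m : nat -> nat -> nat) (k t : nat) : nat :=
  \prod_(l < k) m l (digit b t l).

(* Gamma^{(k)}_j  (paper's k = our k+1, paper's j = our j+1), of size
   m^{(k)}_j N_{k-1}:
   diag_t (Pi_{vol(t), m_j}) * Pi_{m_j, N_{k-1}}. *)
Definition Gamma_j (R : pzRingType) (n b : nat -> nat) (m : nat -> nat -> nat)
    (k j : nat) : 'M[R]_(m k j * Nprod n k) :=
  resq _ (\mxdiag_(t < Nprod b k) pshuffle R (vol b m k t) (m k j))
  *m pshuffle R (m k j) (Nprod n k).

Definition Gamma (R : pzRingType) (n b : nat -> nat) (m : nat -> nat -> nat)
    (k : nat) :=
  \mxdiag_(j < b k) Gamma_j R n b m k j.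

Definition Qhat (R : pzRingType) (d : nat) (n b : nat -> nat)
    (m : nat -> nat -> nat) (k : nat) : 'M[R]_(Nprod n d) :=
  if k == 0%N then 1%:M
  else resq _ ((1%:M : 'M[R]_(Nprod n d %/ Nprod n k.+1)) *t Gamma R n b m k).

Fixpoint mxprod_desc (R : pzRingType) (N : nat) (F : nat -> 'M[R]_N) (k : nat)
  : 'M[R]_N :=
  match k with
  | 0 => 1%:M
  | k'.+1 => F k' *m mxprod_desc F k'
  end.

Definition PM (R : pzRingType) (d : nat) (n b : nat -> nat)
    (m : nat -> nat -> nat) : 'M[R]_(Nprod n d) :=
  mxprod_desc (Qhat R d n b m) d.

(* Q_k of the corollary (paper's k = our k+1), with
   B_{k-1} = Nprod b k, D_{k-1} = Nprod mu k:
   Q_1 = I,  Q_k = I_{b_k N_d / N_k} (x) Pi_{mu_k, B_{k-1}} (x) I_{D_{k-1}}. *)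
Definition Qunif (R : pzRingType) (d : nat) (n b mu : nat -> nat) (k : nat)
  : 'M[R]_(Nprod n d) :=
  if k == 0%N then 1%:M
  else resq _ (((1%:M : 'M[R]_(b k * Nprod n d %/ Nprod n k.+1))
                 *t pshuffle R (mu k) (Nprod b k))
               *t (1%:M : 'M[R]_(Nprod mu k))).

(* Main.v *)
Require Import Defs.
From HB Require Import structures.
From mathcomp Require Import all_boot all_order all_algebra.
From mathcomp Require Import mxtens.
From mathcomp Require Import reals.
From mathcomp Require Import ring.
Local Open Scope ring_scope.

Set Implicit Arguments.
Unset Strict Implicit.
Unset Printing Implicit Defensive.
Import GRing.Theory.

Lemma dmE (a c r : nat) : (r < c)%N -> ((a * c + r) %/ c = a /\ (a * c + r) %% c = r)%N.
Proof.
move=> rc; have c0 : (0 < c)%N by apply: leq_ltn_trans rc.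
by rewrite divnMDl // divn_small // addn0 modnMDl modn_small.
Qed.

Lemma eq_dm (j a c p : nat) : (c < p)%N ->
  (j == a * p + c)%N = (j %/ p == a)%N && (j %% p == c)%N.
Proof.
move=> cp; apply/eqP/andP => [->|[/eqP <- /eqP <-]]; last exact: divn_eq.
by have [-> ->] := dmE a cp.
Qed.

Section Rep.
Variable R : pzRingType.

Definition repm p (A : 'M[R]_p) (f : nat -> nat) :=
  (forall x, (x < p)%N -> (f x < p)%N) /\
  forall i j : 'I_p, A i j = (nat_of_ord j == f i)%:R.

Lemma repm_uniq p (A B : 'M[R]_p) f g : repm A f -> repm B g ->
  (forall x, (x < p)%N -> f x = g x) -> A = B.
Proof.
move=> [_ hA] [_ hB] e; apply/matrixP => i j.
by rewrite hA hB e.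
Qed.

Lemma repm_id p : repm (1%:M : 'M[R]_p) id.
Proof.
split => // i j; rewrite mxE eq_sym //.
Qed.

Lemma repm_shuffle q r q' r' : q = q' -> r = r' ->
  repm (pshuffle R q r) (fun x => (x %% q') * r' + x %/ q')%N.
Proof.
move=> <- <-; split => [x xlt|i j]; last by rewrite mxE.
have q0 : (0 < q)%N by case: q xlt => //.
have h1 : (x %/ q < r)%N by rewrite ltn_divLR // mulnC.
apply: (@leq_trans ((x %% q).+1 * r)%N); first by rewrite mulSn addnC ltn_add2r.
by rewrite leq_mul2r ltn_mod q0 orbT.
Qed.

Lemma repm_mul p (A B : 'M[R]_p) f g : repm A f -> repm B g -> repm (A *m B) (g \o f).
Proof.
move=> [fA hA] [fB hB]; split => [x xp|i j]; first by apply: fB; apply: fA.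
rewrite mxE (bigD1 (Ordinal (fA _ (ltn_ord i)))) //= big1 ?addr0.
  by rewrite hA eqxx mul1r hB.
move=> k /eqP nk; rewrite hA.
suff -> : (nat_of_ord k == f i) = false by rewrite mul0r.
by apply/negP => /eqP e; apply: nk; apply: val_inj.
Qed.

Lemma repm_tens m p q' (A : 'M[R]_m) (B : 'M[R]_p) f g : p = q' ->
  repm A f -> repm B g ->
  repm (A *t B) (fun x => f (x %/ q') * q' + g (x %% q'))%N.
Proof.
move=> <- [fA hA] [fB hB]; split => [x xlt|i j].
  have p0 : (0 < p)%N by case: p xlt {fB hB B} => //; rewrite muln0.
  have h1 : (x %/ p < m)%N by rewrite ltn_divLR.
  have h2 := fB _ (ltn_pmod x p0).
  apply: (@leq_trans ((f (x %/ p)).+1 * p)%N); first by rewrite mulSn addnC ltn_add2r.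
  by rewrite leq_mul2r fA // orbT.
rewrite mxE hA hB /= -natrM mulnb -eq_dm //.
apply: fB; rewrite ltn_mod; case: p {hB B} i j => [|//] i; by rewrite muln0 in i; case: i.
Qed.

Lemma repm_resq N p (A : 'M[R]_p) f : p = N -> repm A f -> repm (resq N A) f.
Proof. by move=> e; subst N; rewrite /resq conform_mx_id. Qed.


Lemma repm_diag r c (p_ : 'I_r -> nat) (B_ : forall i, 'M[R]_(p_ i))
  (F : nat -> nat -> nat) :
  (forall i, p_ i = c) -> (forall i : 'I_r, repm (B_ i) (F i)) ->
  repm (\mxdiag_i B_ i) (fun x => (x %/ c) * c + F (x %/ c) (x %% c))%N.
Proof.
move=> hp hB.
have hsum : (\sum_i p_ i = r * c)%N.
  by rewrite (eq_bigr (fun=> c)) // sum_nat_const card_ord.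
have hpart : forall i0 : nat, (i0 <= r)%N -> (\sum_(i < r | (i < i0)%N) p_ i = i0 * c)%N.
  move=> i0 le; rewrite (eq_bigr (fun=> c)) // -(big_ord_widen r (fun=> c) le).
  by rewrite sum_nat_const card_ord.
have decomp : forall s : 'I_(\sum_i p_ i),
    (nat_of_ord s = tagnat.sig1 s * c + tagnat.sig2 s)%N /\ (tagnat.sig2 s < c)%N.
  move=> s; split; last by rewrite -(hp (tagnat.sig1 s)).
  by rewrite {1}(tagnat.rect s) hpart // ltnW.
split => [x|s t].
  rewrite hsum => xlt.
  have c0 : (0 < c)%N by case: c xlt {hp hB hsum hpart decomp}; rewrite ?muln0.
  have h1 : (x %/ c < r)%N by rewrite ltn_divLR.
  have [fB _] := hB (Ordinal h1).
  have h2 : (F (x %/ c) (x %% c) < c)%N.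
    by rewrite -{2}(hp (Ordinal h1)); have := fB (x %% c)%N; rewrite hp ltn_mod c0; apply.
  apply: (@leq_trans ((x %/ c).+1 * c)%N); first by rewrite mulSn addnC ltn_add2r.
  by rewrite leq_mul2r h1 orbT.
have [es ls] := decomp s; have [et lt] := decomp t.
have [ds ms] := dmE (tagnat.sig1 s) ls.
rewrite -es in ds ms; rewrite ds ms.
rewrite mxE.
have key : forall (i k : 'I_r) (a : 'I_(p_ i)) (b : 'I_(p_ k)),
   ((if i == k then conform_mx 0 (B_ i) else 0) : 'M_(p_ i, p_ k)) a b
   = (if i == k then (nat_of_ord b == F i a)%:R else 0).
  move=> i k a b; case: eqP => [e|_]; last by rewrite mxE.
  by subst k; rewrite conform_mx_id (proj2 (hB i)).
rewrite key {1}et.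
have hF : (F (tagnat.sig1 s) (tagnat.sig2 s) < c)%N.
  by move: (proj1 (hB (tagnat.sig1 s)) _ (ltn_ord (tagnat.sig2 s))) => h; apply: (leq_trans h); rewrite hp.
rewrite eq_dm //.
have [dt mt] := dmE (tagnat.sig1 t) lt.
rewrite dt mt.
case: eqP => [e|ne].
  have -> : (nat_of_ord (tagnat.sig1 t) == tagnat.sig1 s) by rewrite e.
  by [].
have -> : (nat_of_ord (tagnat.sig1 t) == tagnat.sig1 s) = false.
  by apply/eqP => e; apply: ne; apply: val_inj.
by [].
Qed.

End Rep.

Lemma dvd_Nprod (n : nat -> nat) j e : (Nprod n j %| Nprod n (j + e))%N.
Proof.
elim: e => [|e IH]; first by rewrite addn0.
by rewrite addnS /Nprod big_ord_recr /= dvdn_mulr.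
Qed.

Lemma mx0_eq (R : pzRingType) N (A B : 'M[R]_N) : N = 0%N -> A = B.
Proof. by move=> e; apply/matrixP => i; have := ltn_ord i; rewrite {2}e. Qed.

Local Open Scope nat_scope.
Lemma core_ar u B D r : 0 < u -> 0 < B -> 0 < D -> r < u * (B * D) ->
  (r %/ (D * u) * (D * u) + (r %% (D * u) %% D * u + r %% (D * u) %/ D)) %% u * (B * D)
  + (r %/ (D * u) * (D * u) + (r %% (D * u) %% D * u + r %% (D * u) %/ D)) %/ u
  = ((r %/ D) %% u * B + (r %/ D) %/ u) * D + r %% D.
Proof.
move=> u0 B0 D0 rlt.
have Du0 : 0 < D * u by rewrite muln_gt0 D0 u0.
set t := r %/ (D * u); set s := r %% (D * u).
have er : r = t * (D * u) + s by rewrite /t /s -divn_eq.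
have sl : s < D * u by rewrite ltn_mod.
have sDl : s %/ D < u by rewrite ltn_divLR // mulnC.
have sDm : s %% D < D by rewrite ltn_mod.
have ey : t * (D * u) + (s %% D * u + s %/ D) = (t * D + s %% D) * u + s %/ D by ring.
rewrite ey; have [-> ->] := dmE (t * D + s %% D) sDl.
have er2 : r = (t * u) * D + s by rewrite er; ring.
have [rD rm] : r %/ D = t * u + s %/ D /\ r %% D = s %% D.
  by rewrite er2 divnMDl // modnMDl.
rewrite rD rm; have [-> ->] := dmE t sDl.
ring.
Qed.

Lemma outer_ar b u B D x (G : nat -> nat) : 0 < b -> 0 < u -> 0 < B -> 0 < D ->
  (forall r, r < u * (B * D) -> G r = ((r %/ D) %% u * B + (r %/ D) %/ u) * D + r %% D) ->
  x %/ (b * (u * (B * D))) * (b * (u * (B * D))) +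
  ((x %% (b * (u * (B * D)))) %/ (u * (B * D)) * (u * (B * D)) +
   G ((x %% (b * (u * (B * D)))) %% (u * (B * D)))) =
  ((x %/ D) %/ (u * B) * (u * B) +
    (((x %/ D) %% (u * B)) %% u * B + ((x %/ D) %% (u * B)) %/ u)) * D + x %% D.
Proof.
move=> b0 u0 B0 D0 hG.
set S := u * (B * D).
have S0 : 0 < S by rewrite /S !muln_gt0 u0 B0 D0.
set a := x %/ S; set r := x %% S.
have ex : x = a * S + r by rewrite /a /r -divn_eq.
have rl : r < S by rewrite ltn_mod.
have ex2 : x = (a %/ b) * (b * S) + ((a %% b) * S + r).
  by rewrite {1}ex {1}(divn_eq a b); ring.
have hl : (a %% b) * S + r < b * S.
  apply: (@leq_trans ((a %% b).+1 * S)); first by rewrite mulSn addnC ltn_add2r.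
  by rewrite leq_mul2r ltn_mod b0 orbT.
have := dmE (a %/ b) hl; rewrite -ex2 => -[-> ->].
have [-> ->] := dmE (a %% b) rl.
rewrite hG //.
have eD : x = (a * (u * B)) * D + r by rewrite ex /S; ring.
have rDl : r %/ D < u * B by rewrite ltn_divLR // -mulnA.
have [xD xm] : x %/ D = a * (u * B) + r %/ D /\ x %% D = r %% D.
  by rewrite eD divnMDl // modnMDl.
rewrite xD xm; have [-> ->] := dmE a rDl.
have e3 : a %/ b * (b * S) + a %% b * S = a * S by rewrite {3}(divn_eq a b); ring.
rewrite addnA e3 /S; ring.
Qed.

Local Close Scope nat_scope.

Lemma Qk_eq (R : pzRingType) (d : nat) (n b : nat -> nat)
    (m : nat -> nat -> nat) (mu : nat -> nat) k :
  is_blocking d n b m ->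
  (forall k j, (k < d)%N -> (j < b k)%N -> m k j = mu k) -> (k < d)%N ->
  Qhat R d n b m k = Qunif R d n b mu k.
Proof.
move=> hbl hu kd; rewrite /Qhat /Qunif; case: eqP => // k0.
have [Nd0|Ndpos] := posnP (Nprod n d); first exact: mx0_eq.
have hn : forall l, (l < d)%N -> n l = (b l * mu l)%N.
  move=> l ld; have [_ <-] := hbl l ld.
  by rewrite (eq_bigr (fun=> mu l)) ?sum_nat_const ?card_ord // => j _; apply: hu.
have hnpos : forall l, (l < d)%N -> (0 < n l)%N.
  move=> l ld; rewrite lt0n; apply/eqP => e; move: Ndpos.
  by rewrite /Nprod (bigD1 (Ordinal ld)) //= e mul0n.
have hbpos : forall l, (l < d)%N -> (0 < b l)%N.
  by move=> l ld; have := hnpos l ld; rewrite hn // muln_gt0 => /andP[].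
have hmupos : forall l, (l < d)%N -> (0 < mu l)%N.
  by move=> l ld; have := hnpos l ld; rewrite hn // muln_gt0 => /andP[].
have hNk : Nprod n k = (Nprod b k * Nprod mu k)%N.
  rewrite /Nprod -big_split /=; apply: eq_bigr => l _; apply: hn.
  exact: ltn_trans (ltn_ord l) kd.
have hNk1 : Nprod n k.+1 = (Nprod n k * (b k * mu k))%N.
  by rewrite /Nprod big_ord_recr /= hn.
have hdiv : (Nprod n k.+1 %| Nprod n d)%N.
  by have := dvd_Nprod n k.+1 (d - k.+1); rewrite subnKC.
have hvol : forall t, vol b m k t = Nprod mu k.
  move=> t; rewrite /vol /Nprod; apply: eq_bigr => l _.
  have ld : (l < d)%N by exact: ltn_trans (ltn_ord l) kd.
  by apply: hu => //; rewrite /digit ltn_mod hbpos.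
have hsumG : (\sum_(j < b k) (m k j * Nprod n k) = b k * (mu k * Nprod n k))%N.
  rewrite (eq_bigr (fun=> (mu k * Nprod n k)%N)) ?sum_nat_const ?card_ord //.
  by move=> j _; rewrite hu.
eapply repm_uniq.
- apply: repm_resq.
    rewrite hsumG.
    have -> : (b k * (mu k * Nprod n k) = Nprod n k.+1)%N by rewrite hNk1 mulnA mulnC.
    by rewrite divnK.
  apply: repm_tens; [exact: hsumG| exact: repm_id|].
  pose f1 := fun x => (x %/ (Nprod mu k * mu k) * (Nprod mu k * mu k) +
     (fun _ x => (x %% Nprod mu k) * mu k + x %/ Nprod mu k)
       (x %/ (Nprod mu k * mu k)) (x %% (Nprod mu k * mu k)))%N.
  pose g1 := fun x => (x %% mu k * Nprod n k + x %/ mu k)%N.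
  apply: (@repm_diag _ _ (mu k * Nprod n k)%N _ _ (fun _ => g1 \o f1)) => [j|j].
    by rewrite hu.
  rewrite /Gamma_j; apply: repm_mul.
    apply: repm_resq.
      rewrite (eq_bigr (fun=> (Nprod mu k * mu k)%N)); last by move=> t _; rewrite hvol hu.
      by rewrite sum_nat_const card_ord hu // mulnA mulnC hNk.
    apply: (@repm_diag _ _ (Nprod mu k * mu k)%N _ _ (fun _ x => (x %% Nprod mu k) * mu k + x %/ Nprod mu k)%N).
      by move=> t; rewrite hvol hu.
    by move=> t; apply: repm_shuffle; rewrite ?hvol ?hu.
  by apply: repm_shuffle; rewrite ?hu.
- apply: repm_resq.
    rewrite -muln_divA //; set M := (_ %/ _)%N.
    rewrite -[RHS](divnK hdiv) -/M hNk1 hNk; ring.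
  apply: repm_tens; [reflexivity| |exact: repm_id].
  apply: repm_tens; [reflexivity| exact: repm_id|].
  exact: repm_shuffle.
move=> x xlt /=.
have hBpos : (0 < Nprod b k)%N.
  by rewrite /Nprod prodn_gt0 // => l; apply: hbpos; exact: ltn_trans (ltn_ord l) kd.
have hDpos : (0 < Nprod mu k)%N.
  by rewrite /Nprod prodn_gt0 // => l; apply: hmupos; exact: ltn_trans (ltn_ord l) kd.
rewrite hNk.
apply: (@outer_ar _ _ _ _ _ (fun r => ((r %/ (Nprod mu k * mu k) * (Nprod mu k * mu k) +
   (r %% (Nprod mu k * mu k) %% Nprod mu k * mu k + r %% (Nprod mu k * mu k) %/ Nprod mu k))
    %% mu k * (Nprod b k * Nprod mu k)
  + (r %/ (Nprod mu k * mu k) * (Nprod mu k * mu k) +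
   (r %% (Nprod mu k * mu k) %% Nprod mu k * mu k + r %% (Nprod mu k * mu k) %/ Nprod mu k))
    %/ mu k)%N)) => //; try exact: hbpos; try exact: hmupos.
by move=> r rl; apply: core_ar => //; exact: hmupos.
Qed.

Lemma mxprod_eq (R : pzRingType) N (F G : nat -> 'M[R]_N) j :
  (forall l, (l < j)%N -> F l = G l) -> mxprod_desc F j = mxprod_desc G j.
Proof.
elim: j => [//|j IH] h /=; rewrite h // IH // => l lj; apply: h.
exact: ltnW.
Qed.

Theorem corollary3p2 (R : realType) (d : nat) (n b : nat -> nat)
    (m : nat -> nat -> nat) (mu : nat -> nat) :
  is_blocking d n b m ->
  (forall k j, (k < d)%N -> (j < b k)%N -> m k j = mu k) ->
  PM R d n b m = mxprod_desc (Qunif R d n b mu) d.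
Proof.
move=> hbl hu; rewrite /PM; apply: mxprod_eq => l ld.
exact: Qk_eq.
Qed.
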